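(* Let $\Gamma_3^*\subseteq\mathbb{R}^7$ be the set of entropy vectors of triples of discrete random variables. Let $\mathbf{e}_1=[1,0,0,1,1,0,1]^\intercal$, $\mathbf{e}_2=[0,1,0,1,0,1,1]^\intercal$, $\mathbf{e}_3=[0,0,1,0,1,1,1]^\intercal$, $\mathbf{e}_{12}=[1,1,0,1,1,1,1]^\intercal$, $\mathbf{e}_{123'}=[1,1,1,2,2,2,2]^\intercal$, and $\Omega=\mathrm{cone}(\mathbf{e}_1,\mathbf{e}_2,\mathbf{e}_3,\mathbf{e}_{12},\mathbf{e}_{123'})$. Let $\Omega^{\mathrm{in}}$ be the set of all vectors $\lambda_1\mathbf{e}_1+\lambda_2\mathbf{e}_2+\lambda_3\mathbf{e}_3+\lambda_{12}\mathbf{e}_{12}+\lambda_{123'}\mathbf{e}_{123'}$ with all $\lambda_j\ge 0$ such that at least one of the following holds: (i) $\lambda_{12}+\lambda_{123'}\ge\log\lceil 2^{\lambda_{123'}}\rceil$; (ii) $\lambda_{123'}=\log m$ for some $m\in\mathbb{N}$. Then $\Omega^{\mathrm{in}}\subseteq\Omega\cap\Gamma_3^*$.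
   Context: All logarithms are base 2 and entropies are in bits. For a discrete random vector $(X_1,X_2,X_3)$, its entropy vector is $[h_1,h_2,h_3,h_{12},h_{13},h_{23},h_{123}]^\intercal\in\mathbb{R}^7$, where $h_\alpha$ is the Shannon entropy of $(X_i)_{i\in\alpha}$. *)

(* Defs.v *)
From HB Require Import structures.
From mathcomp Require Import all_boot all_order all_algebra.
From mathcomp Require Import all_classical all_reals all_analysis.
Set Implicit Arguments. Unset Strict Implicit. Unset Printing Implicit Defensive.
Import Order.TTheory GRing.Theory Num.Theory.
Local Open Scope ring_scope.

Definition log2 {R : realType} (x : R) : R := ln x / ln 2.

Section Entropy.
Variable R : realType.

Definition is_pmf (T : finType) (p : T -> R) : Prop :=
  (forall t, 0 <= p t) /\ \sum_(t : T) p t = 1.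

Definition pushpmf (T U : finType) (p : T -> R) (g : T -> U) (u : U) : R :=
  \sum_(t : T | g t == u) p t.

Definition entropy (U : finType) (q : U -> R) : R :=
  \sum_(u : U) (if q u == 0 then 0 else - (q u * log2 (q u))).

Definition entropy_vector (A1 A2 A3 : finType) (p : (A1 * A2 * A3)%type -> R)
  : 'cV[R]_7 :=
  \col_(i < 7) nth 0
    [:: entropy (pushpmf p (fun t => t.1.1));
        entropy (pushpmf p (fun t => t.1.2));
        entropy (pushpmf p (fun t => t.2));
        entropy (pushpmf p (fun t => (t.1.1, t.1.2)));
        entropy (pushpmf p (fun t => (t.1.1, t.2)));
        entropy (pushpmf p (fun t => (t.1.2, t.2)));
        entropy (pushpmf p (fun t => t))] i.

(* Gamma_3^* : entropy vectors of triples of (finite-alphabet) discrete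
   random variables; alphabets WLOG 'I_n1, 'I_n2, 'I_n3. *)
Definition Gamma3star (v : 'cV[R]_7) : Prop :=
  exists (n1 n2 n3 : nat) (p : ('I_n1 * 'I_n2 * 'I_n3)%type -> R),
    is_pmf p /\ v = entropy_vector p.

Definition vec7 (a b c d e f g : R) : 'cV[R]_7 :=
  \col_(i < 7) nth 0 [:: a; b; c; d; e; f; g] i.

Definition e1 : 'cV[R]_7 := vec7 1 0 0 1 1 0 1.
Definition e2 : 'cV[R]_7 := vec7 0 1 0 1 0 1 1.
Definition e3 : 'cV[R]_7 := vec7 0 0 1 0 1 1 1.
Definition e12 : 'cV[R]_7 := vec7 1 1 0 1 1 1 1.
Definition e123' : 'cV[R]_7 := vec7 1 1 1 2 2 2 2.

Definition comb (l1 l2 l3 l12 l123' : R) : 'cV[R]_7 :=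
  l1 *: e1 + l2 *: e2 + l3 *: e3 + l12 *: e12 + l123' *: e123'.

Definition Omega (v : 'cV[R]_7) : Prop :=
  exists l1 l2 l3 l12 l123' : R,
    [/\ 0 <= l1, 0 <= l2, 0 <= l3, 0 <= l12 & 0 <= l123'] /\
    v = comb l1 l2 l3 l12 l123'.

Definition Omega_in (v : 'cV[R]_7) : Prop :=
  exists l1 l2 l3 l12 l123' : R,
    [/\ 0 <= l1, 0 <= l2, 0 <= l3, 0 <= l12 & 0 <= l123'] /\
    v = comb l1 l2 l3 l12 l123' /\
    (log2 ((Num.ceil (2 `^ l123'))%:~R) <= l12 + l123'
     \/ exists m : nat, (0 < m)%N /\ l123' = log2 (m%:R)).

End Entropy.

(* Main.v *)
Require Import Defs.
From HB Require Import structures.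
From mathcomp Require Import all_boot all_order all_algebra.
From mathcomp Require Import all_classical all_reals all_analysis.
From mathcomp Require Import ring lra.
Import Order.TTheory GRing.Theory Num.Theory.
Import numFieldNormedType.Exports.
Local Open Scope ring_scope.
Set Implicit Arguments. Unset Strict Implicit. Unset Printing Implicit Defensive.

Section Basics.
Variable R : realType.

Definition Hrel (T : finType) (p : T -> R) (r : T -> T -> bool) : R :=
  - \sum_(t : T) p t * log2 (\sum_(s : T | r s t) p s).

Lemma Hrel_ext (T : finType) (p : T -> R) (r r' : T -> T -> bool) :
  (forall s t, r s t = r' s t) -> Hrel p r = Hrel p r'.
Proof.
move=> e; rewrite /Hrel; congr (- _); apply: eq_bigr => t _.
by congr (_ * log2 _); apply: eq_bigl => s; rewrite e.
Qed.

Lemma entropyE (U : finType) (q : U -> R) :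
  entropy q = - \sum_(u : U) q u * log2 (q u).
Proof.
rewrite /entropy -sumrN; apply: eq_bigr => u _.
by case: eqP => [->|]; rewrite ?mul0r ?oppr0.
Qed.

Lemma entropy_ext (U : finType) (q q' : U -> R) :
  q =1 q' -> entropy q = entropy q'.
Proof. by move=> e; rewrite /entropy; apply: eq_bigr => u _; rewrite e. Qed.

Lemma sum_fiber (T U : finType) (F : T -> U) (G : T -> R) :
  \sum_(u : U) \sum_(t : T | F t == u) G t = \sum_(t : T) G t.
Proof.
rewrite (exchange_big_dep xpredT) //=; apply: eq_bigr => t _.
by rewrite (big_pred1 (F t)) // => u; rewrite eq_sym.
Qed.


Lemma entropy_push (T U : finType) (p : T -> R) (g : T -> U) :
  entropy (pushpmf p g) = Hrel p (fun s t => g s == g t).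
Proof.
rewrite entropyE /Hrel; congr (- _).
rewrite -(sum_fiber g (fun t => p t * log2 (pushpmf p g (g t)))).
apply: eq_bigr => u _; rewrite {1}/pushpmf big_distrl /=.
by apply: eq_bigr => t /eqP ->.
Qed.

Lemma push_comp (T U V : finType) (p : T -> R) (F : T -> U) (g : U -> V) :
  pushpmf (pushpmf p F) g =1 pushpmf p (g \o F).
Proof.
move=> w; rewrite /pushpmf /=.
rewrite (partition_big F (fun u => g u == w)) //=.
apply: eq_bigr => u /eqP guw; apply: eq_bigl => t.
by case: (eqVneq (F t) u) => [->|]; rewrite ?guw ?andbF ?eqxx.
Qed.

Lemma push_pmf (T U : finType) (p : T -> R) (F : T -> U) :
  is_pmf p -> is_pmf (pushpmf p F).
Proof.
case=> p0 p1; split; first by move=> u; apply: sumr_ge0.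
by rewrite /pushpmf sum_fiber.
Qed.

Lemma fiber_ge (T : finType) (p : T -> R) (r : T -> T -> bool) t :
  (forall s, 0 <= p s) -> r t t -> p t <= \sum_(s | r s t) p s.
Proof.
move=> p0 rtt; rewrite (bigD1 t) //= lerDl; apply: sumr_ge0 => s _; exact: p0.
Qed.

Lemma log2M (x y : R) : 0 < x -> 0 < y -> log2 (x * y) = log2 x + log2 y.
Proof. by move=> x0 y0; rewrite /log2 lnM ?mulrDl // posrE. Qed.

Lemma Hrel_prod (T1 T2 : finType) (p1 : T1 -> R) (p2 : T2 -> R)
  (r1 : T1 -> T1 -> bool) (r2 : T2 -> T2 -> bool) :
  is_pmf p1 -> is_pmf p2 -> (forall t, r1 t t) -> (forall t, r2 t t) ->
  Hrel (fun t : T1 * T2 => p1 t.1 * p2 t.2) (fun s t => r1 s.1 t.1 && r2 s.2 t.2)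
  = Hrel p1 r1 + Hrel p2 r2.
Proof.
case=> p10 p11 [p20 p21] r1r r2r.
rewrite /Hrel -opprD; congr (- _).
set A := fun x => \sum_(s | r1 s x) p1 s.
set B := fun x => \sum_(s | r2 s x) p2 s.
have inner : forall t : T1 * T2,
  \sum_(s | r1 s.1 t.1 && r2 s.2 t.2) p1 s.1 * p2 s.2 = A t.1 * B t.2.
  move=> t; rewrite /A /B big_distrlr /=.
  by rewrite (pair_big_dep (fun s => r1 s t.1) (fun _ s => r2 s t.2)
                 (fun a b => p1 a * p2 b)).
have pt : forall t : T1 * T2,
  p1 t.1 * p2 t.2 * log2 (A t.1 * B t.2) =
  p1 t.1 * log2 (A t.1) * p2 t.2 + p2 t.2 * log2 (B t.2) * p1 t.1.
  move=> [t1 t2] /=.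
  have [->|n1] := eqVneq (p1 t1) 0; first by rewrite !(mul0r, mulr0, addr0).
  have [->|n2] := eqVneq (p2 t2) 0; first by rewrite !(mul0r, mulr0, add0r).
  have A0 : 0 < A t1.
    by apply: lt_le_trans (fiber_ge p10 (r1r t1)); rewrite lt_def n1 p10.
  have B0 : 0 < B t2.
    by apply: lt_le_trans (fiber_ge p20 (r2r t2)); rewrite lt_def n2 p20.
  rewrite log2M //; ring.
under eq_bigr => t _ do rewrite inner pt.
rewrite big_split /=.
rewrite -(pair_bigA _ (fun a b => p1 a * log2 (A a) * p2 b)).
rewrite -(pair_bigA _ (fun a b => p2 b * log2 (B b) * p1 a)) /=.
rewrite [X in _ + X = _]exchange_big /=.
congr (_ + _); apply: eq_bigr => x _.
  by rewrite -big_distrr /= p21 mulr1.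
by rewrite -big_distrr /= p11 mulr1.
Qed.

Lemma Hrel_inj (T : finType) (p : T -> R) (r : T -> T -> bool) (phi : T -> T) :
  injective phi ->
  Hrel (fun t => p (phi t)) (fun s t => r (phi s) (phi t)) = Hrel p r.
Proof.
move=> inj; rewrite /Hrel; congr (- _); symmetry.
rewrite (reindex_inj inj) /=; apply: eq_bigr => t _.
by rewrite (reindex_inj inj).
Qed.


Lemma vec7_add (a b c d e f g a' b' c' d' e' f' g' : R) :
  vec7 a b c d e f g + vec7 a' b' c' d' e' f' g' =
  vec7 (a + a') (b + b') (c + c') (d + d') (e + e') (f + f') (g + g').
Proof.
apply/matrixP => i j; rewrite !mxE.
by case: i => [[|[|[|[|[|[|[|//]]]]]]] ?].
Qed.

Lemma vec7_scale (k a b c d e f g : R) :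
  k *: vec7 a b c d e f g =
  vec7 (k * a) (k * b) (k * c) (k * d) (k * e) (k * f) (k * g).
Proof.
apply/matrixP => i j; rewrite !mxE.
by case: i => [[|[|[|[|[|[|[|//]]]]]]] ?].
Qed.

Definition EV (T : finType) (p : T -> R) (B1 B2 B3 : finType)
  (f1 : T -> B1) (f2 : T -> B2) (f3 : T -> B3) : 'cV[R]_7 :=
  vec7 (Hrel p (fun s t => f1 s == f1 t))
       (Hrel p (fun s t => f2 s == f2 t))
       (Hrel p (fun s t => f3 s == f3 t))
       (Hrel p (fun s t => (f1 s == f1 t) && (f2 s == f2 t)))
       (Hrel p (fun s t => (f1 s == f1 t) && (f3 s == f3 t)))
       (Hrel p (fun s t => (f2 s == f2 t) && (f3 s == f3 t)))
       (Hrel p (fun s t => [&& f1 s == f1 t, f2 s == f2 t & f3 s == f3 t])).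

Definition Ach (v : 'cV[R]_7) : Prop :=
  exists (T : finType) (p : T -> R) (B1 B2 B3 : finType)
    (f1 : T -> B1) (f2 : T -> B2) (f3 : T -> B3),
    is_pmf p /\ v = EV p f1 f2 f3.

Lemma Ach_Gamma v : Ach v -> Gamma3star v.
Proof.
case=> T [p [B1 [B2 [B3 [f1 [f2 [f3 [pp ->]]]]]]]].
exists #|B1|, #|B2|, #|B3|.
pose F := fun t => (enum_rank (f1 t), enum_rank (f2 t), enum_rank (f3 t)).
exists (pushpmf p F); split; first exact: push_pmf.
apply/matrixP => i j; rewrite !mxE; congr (nth 0 _ i).
congr [:: _; _; _; _; _; _; _];
  rewrite (entropy_ext (push_comp _ _ _)) entropy_push;
  apply: Hrel_ext => s t /=;
  by rewrite ?xpair_eqE !(inj_eq enum_rank_inj) ?andbA.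
Qed.

Lemma Ach_add v w : Ach v -> Ach w -> Ach (v + w).
Proof.
case=> T [p [B1 [B2 [B3 [f1 [f2 [f3 [pp ->]]]]]]]].
case=> T' [p' [B1' [B2' [B3' [f1' [f2' [f3' [pp' ->]]]]]]]].
exists (T * T')%type, (fun t => p t.1 * p' t.2), (B1 * B1')%type,
  (B2 * B2')%type, (B3 * B3')%type, (fun t => (f1 t.1, f1' t.2)),
  (fun t => (f2 t.1, f2' t.2)), (fun t => (f3 t.1, f3' t.2)).
have [p0 p1] := pp; have [p0' p1'] := pp'.
split.
  split; first by move=> t; apply: mulr_ge0.
  rewrite -(pair_bigA _ (fun a b => p a * p' b)) /=.
  under eq_bigr => a _ do rewrite -big_distrr /= p1' mulr1.
  exact: p1.
rewrite /EV vec7_add; congr vec7;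
  rewrite -Hrel_prod //; try (by move=> x; rewrite !eqxx);
  apply: Hrel_ext => s t; rewrite !xpair_eqE;
  by do ![case: (_ == _)].
Qed.


Definition xl (y : R) := y * ln y.

Lemma xl_cont (y : R) : 0 < y -> {for y, continuous (xl : R -> R)}.
Proof.
move=> y0; apply: continuousM; first exact: cvg_id.
exact: continuous_ln.
Qed.

Definition gfun (n : nat) (x : R) := - (xl (1 - n%:R * x) + n%:R * xl x).

Lemma gfun_cont (n : nat) (x : R) : 0 < x -> 0 < 1 - n%:R * x ->
  {for x, continuous (gfun n : R -> R)}.
Proof.
move=> x0 y0; apply: continuousN; apply: continuousD.
  have hc : {for x, continuous ((fun x => 1 - n%:R * x) : R -> R)}.
    apply: continuousB; first exact: cvg_cst.
    apply: continuousM; first exact: cvg_cst.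
    exact: cvg_id.
  exact: (continuous_comp hc (xl_cont y0)).
apply: continuousM; first exact: cvg_cst.
exact: xl_cont.
Qed.


Lemma xl_bound1 (y : R) : 0 < y -> - xl y <= 1 - y.
Proof.
move=> y0; rewrite /xl.
have yi : 0 < y^-1 by rewrite invr_gt0.
have h : ln (y^-1) <= y^-1 - 1.
  have e : 1 + (y^-1 - 1) = y^-1 by ring.
  have := @le_ln1Dx R (y^-1 - 1); rewrite e; apply; lra.
rewrite lnV ?posrE // in h.
have := ler_wpM2l (ltW y0) h; rewrite mulrBr mulfV ?gt_eqF // mulr1.
move=> hh; rewrite -mulrN; lra.
Qed.

Lemma xl_bound2 (k : R) : 1 <= k -> - xl ((k * k)^-1) <= 2 / k.
Proof.
move=> k1; have k0 : 0 < k by lra.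
have kk : 0 < k * k by apply: mulr_gt0.
rewrite /xl lnV ?posrE // lnM ?posrE //.
have := ln_sublinear k0 => lk.
have ki : 0 < (k * k)^-1 by rewrite invr_gt0.
have e : 2 / k = (k * k)^-1 * (2 * k) by field; rewrite gt_eqF.
rewrite e mulrN opprK; apply: ler_wpM2l; [exact: ltW | lra].
Qed.

Lemma exists_ent (n : nat) (b : R) : 0 <= b -> b <= log2 (n.+1)%:R ->
  exists q : 'I_n.+1 -> R, is_pmf q /\ - \sum_t q t * log2 (q t) = b.
Proof.
move=> b0 bN.
have ln2 : 0 < ln (2:R) by apply: ln_gt0; lra.
have [<-|bpos] := eqVneq 0 b.
  exists (fun i => (i == ord0)%:R); split.
    split=> [i|]; first exact: ler0n.
    by rewrite (bigD1 ord0) //= big1 ?addr0 // => i /negbTE ->.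
  rewrite big1 ?oppr0 // => i _; case: (i == ord0).
    by rewrite /log2 ln1 mul0r mulr0.
  by rewrite mul0r.
have {bpos} bpos : 0 < b by rewrite lt_def eq_sym bpos b0.
set N : R := (n.+1)%:R.
have N1 : 1 <= N by rewrite /N ler1n.
have N0 : 0 < N by lra.
have Nn : N = n%:R + 1 by rewrite /N -addn1 natrD.
have n0 : 0 <= (n%:R : R) by exact: ler0n.
set w := N^-1.
have w0 : 0 < w by rewrite invr_gt0.
have wN : w * N = 1 by rewrite mulVf // gt_eqF.
have pos1 : forall x, 0 < x -> x <= w -> 0 < 1 - n%:R * x.
  move=> x x0 xw; have : n%:R * x <= n%:R * w by apply: ler_wpM2l.
  nra.
have lnN : b * ln 2 <= ln N.
  by move: bN; rewrite /log2 ler_pdivlMr.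
set K := (Num.bound (3 * n%:R / (b * ln 2)) + n.+1)%N.
set k : R := K%:R.
have kN : N <= k by rewrite /k /N ler_nat /K leq_addl.
have kb : 3 * n%:R / (b * ln 2) < k.
  apply: lt_le_trans (archi_boundP _) _.
    apply: divr_ge0; [lra | apply: mulr_ge0; lra].
  by rewrite /k ler_nat /K leq_addr.
have k1 : 1 <= k by lra.
have k0 : 0 < k by lra.
set x0 := (k * k)^-1.
have kk : 0 < k * k by apply: mulr_gt0.
have x00 : 0 < x0 by rewrite invr_gt0.
have x0k : x0 * (k * k) = 1 by rewrite mulVf // gt_eqF.
have x0w : x0 <= w.
  rewrite /x0 /w lef_pV2 ?posrE //; nra.
have gx0 : gfun n x0 <= b * ln 2.
  have -> : gfun n x0 = - xl (1 - n%:R * x0) + n%:R * - xl x0.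
    by rewrite /gfun; ring.
  have h1 := xl_bound1 (pos1 _ x00 x0w).
  have h2 := xl_bound2 k1.
  have h3 : n%:R * - xl x0 <= n%:R * (2 / k) by apply: ler_wpM2l.
  have bl : 0 < b * ln 2 by apply: mulr_gt0.
  have h4 : 3 * n%:R < k * (b * ln 2).
    by move: kb; rewrite ltr_pdivrMr.
  have et : 2 / k * k = 2 by rewrite mulfVK ?gt_eqF.
  have e2 : x0 * k <= 1 by nra.
  set t := 2 / k in h3 et.
  suff : k * (n%:R * x0 + n%:R * t) < k * (b * ln 2).
    rewrite ltr_pM2l // => hh; lra.
  have -> : k * (n%:R * x0 + n%:R * t) = n%:R * (x0 * k) + n%:R * (t * k).
    by ring.
  rewrite et; nra.
have gw : gfun n w = ln N.
  have e : 1 - n%:R * w = w by rewrite Nn in wN; lra.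
  rewrite /gfun e /xl /w lnV ?posrE // -/w.
  have -> : forall L : R, -(w * - L + n%:R * (w * - L)) = (w * (n%:R + 1)) * L.
    by move=> L; ring.
  by rewrite -Nn wN mul1r.
have [c] : exists2 c, c \in `[x0, w] & gfun n c = b * ln 2.
  apply: IVT => //.
    apply: continuous_in_subspaceT => x; rewrite inE /= in_itv /= => /andP[x1 x2].
    apply: gfun_cont; first lra.
    by apply: pos1 => //; lra.
  rewrite ge_min le_max gx0 gw lnN orbT /=.
  by [].
rewrite in_itv /= => /andP[c1 c2] gc.
have c0 : 0 < c by lra.
have y0 := pos1 _ c0 c2.
have L : forall a d : R, \sum_(i < n) (if lift ord0 i == ord0 :> 'I_n.+1 then a else d) = \sum_(i < n) d.
  by move=> a d; apply: eq_bigr.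
exists (fun i => if i == ord0 then 1 - n%:R * c else c); split.
  split=> [i|]; first by case: (i == ord0); lra.
  rewrite big_ord_recl eqxx.
  rewrite (L 0).
  rewrite sumr_const card_ord -mulr_natl; ring.
rewrite big_ord_recl eqxx.
rewrite /=.
rewrite sumr_const card_ord -[c * log2 c *+ n]mulr_natl.
transitivity (gfun n c / ln 2); first by rewrite /gfun /xl /log2; ring.
by rewrite gc mulfK // gt_eqF.
Qed.


Lemma Hrel_eq (T : finType) (q : T -> R) :
  Hrel q (fun s t => s == t) = - \sum_t q t * log2 (q t).
Proof.
rewrite /Hrel; congr (- _); apply: eq_bigr => t _.
by rewrite (big_pred1 t).
Qed.

Lemma Hrel_true (T : finType) (q : T -> R) : is_pmf q ->
  Hrel q (fun _ _ => true) = 0.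
Proof.
case=> _ q1; rewrite /Hrel q1 /log2 ln1 mul0r.
by rewrite big1 ?oppr0 // => t _; rewrite mulr0.
Qed.

Lemma ent_any (c : R) : 0 <= c ->
  exists n (q : 'I_n.+1 -> R), is_pmf q /\ Hrel q (fun s t => s == t) = c.
Proof.
move=> c0.
set k := Num.bound c.
have ck : c < k%:R by exact: archi_boundP.
have ln2 : 0 < ln (2:R) by apply: ln_gt0; lra.
have L : log2 ((2 ^ k)%N.-1.+1)%:R = k%:R :> R.
  rewrite prednK ?expn_gt0 // natrX /log2 lnXn; last by lra.
  by rewrite -[ln 2 *+ k]mulr_natl mulfK // gt_eqF.
have hb : c <= log2 ((2 ^ k)%N.-1.+1)%:R by rewrite L; lra.
have [q [qp qe]] := exists_ent c0 hb.
by exists (2 ^ k).-1, q; split => //; rewrite Hrel_eq.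
Qed.


Lemma Ach_single (c : R) : 0 <= c ->
  [/\ Ach (c *: e1 R), Ach (c *: e2 R), Ach (c *: e3 R) & Ach (c *: e12 R)].
Proof.
move=> c0; have [n [q [qp qe]]] := ent_any c0.
have HE : forall r : 'I_n.+1 -> 'I_n.+1 -> bool,
    (forall s t, r s t = (s == t)) -> c = Hrel q r.
  by move=> r e; rewrite -qe; apply: Hrel_ext.
have HT : forall r : 'I_n.+1 -> 'I_n.+1 -> bool,
    (forall s t, r s t = true) -> 0 = Hrel q r.
  by move=> r e; rewrite -(Hrel_true qp); apply: Hrel_ext.
split.
- exists (ordinal n.+1), q, (ordinal n.+1), unit, unit,
    id, (fun _ => tt), (fun _ => tt); split => //.
  rewrite /EV /e1 vec7_scale !mulr1 !mulr0; congr vec7;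
    (apply: HE || apply: HT) => s t /=; by rewrite ?andbT ?andTb.
- exists (ordinal n.+1), q, unit, (ordinal n.+1), unit,
    (fun _ => tt), id, (fun _ => tt); split => //.
  rewrite /EV /e2 vec7_scale !mulr1 !mulr0; congr vec7;
    (apply: HE || apply: HT) => s t /=; by rewrite ?andbT ?andTb.
- exists (ordinal n.+1), q, unit, unit, (ordinal n.+1),
    (fun _ => tt), (fun _ => tt), id; split => //.
  rewrite /EV /e3 vec7_scale !mulr1 !mulr0; congr vec7;
    (apply: HE || apply: HT) => s t /=; by rewrite ?andbT ?andTb.
- exists (ordinal n.+1), q, (ordinal n.+1), (ordinal n.+1), unit,
    id, id, (fun _ => tt); split => //.
  rewrite /EV /e12 vec7_scale !mulr1 !mulr0; congr vec7;
    (apply: HE || apply: HT) => s t /=; by rewrite ?andbT ?andTb ?andbb.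
Qed.


Lemma prod_pmf (T1 T2 : finType) (p1 : T1 -> R) (p2 : T2 -> R) :
  is_pmf p1 -> is_pmf p2 -> is_pmf (fun t : T1 * T2 => p1 t.1 * p2 t.2).
Proof.
case=> p0 p1s [p0' p1'].
split; first by move=> t; apply: mulr_ge0.
rewrite -(pair_bigA _ (fun a b => p1 a * p2 b)) /=.
under eq_bigr => a _ do rewrite -big_distrr /= p1' mulr1.
exact: p1s.
Qed.

Lemma Ach_tri (n : nat) (a b : R) : 0 <= b -> b <= log2 (n.+1)%:R ->
  log2 (n.+1)%:R <= a + b -> Ach (a *: e12 R + b *: e123' R).
Proof.
move=> b0 bN ab.
set L : R := log2 (n.+1)%:R.
have [q [qp qe]] := exists_ent b0 bN.
have qH : Hrel q (fun s t => s == t) = b by rewrite Hrel_eq.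
set N : R := (n.+1)%:R.
have N0 : 0 < N by rewrite /N ltr0n.
pose u := fun _ : 'I_n.+1 => N^-1.
have up : is_pmf u.
  split=> [i|]; first by rewrite /u invr_ge0 ltW.
  by rewrite sumr_const card_ord -[N^-1 *+ _]mulr_natl mulfV // gt_eqF.
have uH : Hrel u (fun s t => s == t) = L.
  rewrite Hrel_eq /u sumr_const card_ord -[(_ * _) *+ _]mulr_natl.
  rewrite mulrA mulfV ?gt_eqF // mul1r /log2 lnV ?posrE // mulNr opprK.
  by [].
have uT := Hrel_true up.
have qT := Hrel_true qp.
pose p := fun t : 'I_n.+1 * 'I_n.+1 => u t.1 * q t.2.
have HP : forall r r1 r2, (forall s t, r s t = r1 s.1 t.1 && r2 s.2 t.2) ->
    (forall x, r1 x x) -> (forall x, r2 x x) ->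
    Hrel p r = Hrel u r1 + Hrel q r2.
  by move=> r r1 r2 e h1 h2; rewrite -Hrel_prod //; apply: Hrel_ext.
have K1 : forall x y z : 'I_n.+1, (x - y == x - z) = (y == z).
  move=> x y z; apply/eqP/eqP => [h|->//].
  by apply: oppr_inj; apply: (addrI x).
have K2 : forall x y z : 'I_n.+1, (x - z == y - z) = (x == y).
  by move=> x y z; apply/eqP/eqP => [h|->//]; exact: (addIr _ h).
have HPv : forall r r1 r2 v1 v2,
    (forall s t, r s t = r1 s.1 t.1 && r2 s.2 t.2) ->
    (forall x, r1 x x) -> (forall x, r2 x x) ->
    Hrel u r1 = v1 -> Hrel q r2 = v2 -> v1 + v2 = Hrel p r.
  by move=> r r1 r2 v1 v2 e h1 h2 <- <-; rewrite (HP r r1 r2).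
have Hid : L + b = Hrel p (fun s t => (s.1 == t.1) && (s.2 == t.2)).
  apply: (HPv _ (fun x y => x == y) (fun x y => x == y)) => //.
pose phi := fun t : 'I_n.+1 * 'I_n.+1 => (t.1 - t.2, t.2).
have phiI : injective phi.
  move=> [x y] [x' y'] e.
  have h : x - y = x' - y' := congr1 fst e.
  have e2 : y = y' := congr1 snd e.
  rewrite e2 in h *; congr pair.
  exact: (addIr _ h).
have pe : (fun t => p (phi t)) = p := erefl.
have tri : Ach (vec7 L L b (L + b) (L + b) (L + b) (L + b)).
  exists ('I_n.+1 * 'I_n.+1)%type, p, 'I_n.+1, 'I_n.+1, 'I_n.+1,
    (fun t => t.1), (fun t => t.1 - t.2), (fun t => t.2).
  split; first exact: prod_pmf.
  rewrite /EV; congr vec7.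
  - rewrite -[X in X = _]addr0.
    apply: (HPv _ (fun x y => x == y) (fun _ _ => true)) => //.
    by move=> s t; rewrite andbT.
  - have H := @Hrel_inj _ p (fun s t => (s.1 == t.1) && true) phi phiI.
    have H2 : Hrel p (fun s t => s.1 - s.2 == t.1 - t.2) =
       Hrel (fun t => p (phi t)) (fun s t => ((phi s).1 == (phi t).1) && true).
      by apply: Hrel_ext => s t /=; rewrite andbT.
    rewrite H2 H.
    rewrite -[X in X = _]addr0.
    by apply: (HPv _ (fun x y => x == y) (fun _ _ => true)) => //.
  - rewrite -[X in X = _]add0r.
    by apply: (HPv _ (fun _ _ => true) (fun x y => x == y)) => //.
  - rewrite Hid; apply: Hrel_ext => -[x y] [x' y'] /=.
    by case: (eqVneq x x') => [<-|nx]; rewrite ?K1 //= andFb.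
  - by rewrite Hid.
  - rewrite Hid; apply: Hrel_ext => -[x y] [x' y'] /=.
    by case: (eqVneq y y') => [<-|ny]; rewrite ?K2 //= !andbF.
  - rewrite Hid; apply: Hrel_ext => -[x y] [x' y'] /=.
    case: (eqVneq x x') => [<-|nx] //=; case: (eqVneq y y') => [<-|ny].
      by rewrite eqxx.
    by rewrite K1 (negbTE ny).
have ab0 : 0 <= a + b - L by rewrite /L; lra.
have [_ _ _ W] := Ach_single ab0.
suff -> : a *: e12 R + b *: e123' R =
   (a + b - L) *: e12 R + vec7 L L b (L + b) (L + b) (L + b) (L + b).
  exact: Ach_add W tri.
rewrite /e12 /e123' !vec7_scale !vec7_add; congr vec7; ring.
Qed.

End Basics.

Theorem corollary2 (R : realType) (v : 'cV[R]_7) :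
  Omega_in v -> Omega v /\ Gamma3star v.
Proof.
case=> l1 [l2 [l3 [l12 [l3' [[h1 h2 h3 h4 h5] [-> hc]]]]]].
split; first by exists l1, l2, l3, l12, l3'; split.
apply: Ach_Gamma.
rewrite /comb -addrA.
have [A1 _ _ _] := Ach_single h1.
have [_ A2 _ _] := Ach_single h2.
have [_ _ A3 _] := Ach_single h3.
apply: Ach_add; first by apply: Ach_add => //; apply: Ach_add.
have ln2 : 0 < ln (2:R) by apply: ln_gt0; lra.
case: hc => [hi|[m [m0 ->]]]; last first.
  have lm : 0 <= log2 (m%:R : R).
    rewrite /log2; apply: divr_ge0; last exact: ltW.
    by apply: ln_ge0; rewrite ler1n.
  apply: (@Ach_tri _ m.-1); rewrite ?prednK //; lra.
have hp : 0 < 2 `^ l3' :> R by apply: powR_gt0; lra.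
have hce := ceil_ge (2 `^ l3').
have c0 : (0 : int) < Num.ceil (2 `^ l3').
  by rewrite -(@ltr0z R); apply: lt_le_trans hp hce.
move: hi hce c0; case: (Num.ceil (2 `^ l3')) => [k|k] hi hce //.
rewrite ltz_nat => k0.
have e : ((Posz k)%:~R : R) = k%:R by [].
rewrite e in hi hce.
apply: (@Ach_tri _ k.-1); rewrite ?prednK //.
rewrite /log2 ler_pdivlMr // -ln_powR ler_ln ?posrE //.
by rewrite ltr0n.
Qed.
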